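(* Let $v\in\mathbb R^3$ with $|v|=1$ and let $\phi,\psi,\rho>0$. Let $P=\begin{bmatrix}P_{aa}&P_{ab}\\ P_{ab}^T&P_{bb}\end{bmatrix}$ be a $6\times6$ matrix with $P_{aa}=\phi I$, $P_{ab}=-\psi I$ and $P_{bb}$ arbitrary, let $R=\rho I$, and let $H=\begin{bmatrix}[v\times] & 0\end{bmatrix}$ ($3\times6$). Then $HPH^T+R$ is invertible and the Kalman gain $K=PH^T(HPH^T+R)^{-1}$ equals $$K=\frac{1}{1+\rho/\phi}\begin{bmatrix}I\\ -(\psi/\phi)I\end{bmatrix}[v\times]^T.$$ Consequently, for every $\xi\in\mathbb R^3$, $$K(\xi-v)=\frac{1}{1+\rho/\phi}\begin{bmatrix}\xi\times v\\ -(\psi/\phi)\,(\xi\times v)\end{bmatrix},$$ i.e. the EKF update $[\delta a;\delta b]=K(\xi-v)$ coincides with the complementary-filter update $\delta a=w_a\,(\xi\times v)$, $\delta b=-w_b\,\delta a$ with $w_a=\frac{1}{1+\rho/\phi}$ and $w_b=\psi/\phi$.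
   Context: $[v\times]$ denotes the $3\times3$ skew-symmetric matrix with $[v\times]w=v\times w$. $I$ is the $3\times3$ identity. *)

(* Defs.v *)
From HB Require Import structures.
From mathcomp Require Import all_boot all_order all_algebra.
Set Implicit Arguments. Unset Strict Implicit. Unset Printing Implicit Defensive.
Import Order.TTheory GRing.Theory Num.Theory.
Local Open Scope ring_scope.

Definition c0 {R : pzRingType} (v : 'cV[R]_3) : R := v (inord 0) 0.
Definition c1 {R : pzRingType} (v : 'cV[R]_3) : R := v (inord 1) 0.
Definition c2 {R : pzRingType} (v : 'cV[R]_3) : R := v (inord 2) 0.

Definition crossv {R : pzRingType} (a b : 'cV[R]_3) : 'cV[R]_3 :=
  \col_(i < 3)
    (if (i : nat) == 0%N then c1 a * c2 b - c2 a * c1 b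
     else if (i : nat) == 1%N then c2 a * c0 b - c0 a * c2 b
     else c0 a * c1 b - c1 a * c0 b).

Definition crossmx {R : pzRingType} (v : 'cV[R]_3) : 'M[R]_3 :=
  \matrix_(i < 3, j < 3)
    (if (i : nat) == 0%N then
       (if (j : nat) == 0%N then 0 else if (j : nat) == 1%N then - c2 v else c1 v)
     else if (i : nat) == 1%N then
       (if (j : nat) == 0%N then c2 v else if (j : nat) == 1%N then 0 else - c0 v)
     else
       (if (j : nat) == 0%N then - c1 v else if (j : nat) == 1%N then c0 v else 0)).

Definition sqnorm {R : pzRingType} (v : 'cV[R]_3) : R := \sum_(i < 3) v i 0 ^+ 2.

(* Main.v *)
Require Import Defs.
From HB Require Import structures.
From mathcomp Require Import all_boot all_order all_algebra.
From mathcomp Require Import ring lra.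
Import Order.TTheory GRing.Theory Num.Theory.
Local Open Scope ring_scope.

Lemma vE (R : realFieldType) (v : 'cV[R]_3) (i : 'I_3) (j : 'I_1) : v i j = [:: c0 v; c1 v; c2 v]`_i.
Proof.
rewrite (ord1 j).
case: i => [[|[|[|?]]] Hi] //=; rewrite /c0 /c1 /c2; congr (v _ 0); apply/val_inj; by rewrite /= inordK.
Qed.

Ltac ent := apply/matrixP; let i := fresh "i" in let j := fresh "j" in move=> i j; rewrite !mxE; rewrite ?(big_ord_recr, big_ord0, mxE) /=;
  rewrite ?mxE ?vE /=; case: i => [[|[|[|?]]] ?] //=; case: j => [[|[|[|?]]] ?] //=; rewrite ?vE /=.

Section L.
Variable R : realFieldType.
Variable v : 'cV[R]_3.
Lemma nE : sqnorm v = c0 v ^+ 2 + c1 v ^+ 2 + c2 v ^+ 2.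
Proof. by rewrite /sqnorm !big_ord_recr big_ord0 /= !vE /= add0r. Qed.

Lemma L1 : sqnorm v = 1 -> crossmx v *m (crossmx v)^T = 1%:M - v *m v^T.
Proof. rewrite nE => h. ent; first [ring | (rewrite -h; ring)]. Qed.

Lemma L2 : (crossmx v)^T *m (v *m v^T) = 0.
Proof. ent; ring. Qed.

Lemma L3 : sqnorm v = 1 -> (v *m v^T) *m (v *m v^T) = v *m v^T.
Proof.
rewrite nE => h.
have e : v^T *m v = 1%:M.
  apply/matrixP => i j; rewrite (ord1 i) (ord1 j) !mxE !big_ord_recr big_ord0 /= !mxE !vE /= -h; ring.
by rewrite mulmxA -(mulmxA v) e mulmx1.
Qed.

Lemma L4 (xi : 'cV[R]_3) : (crossmx v)^T *m (xi - v) = crossv xi v.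
Proof. ent; ring. Qed.
End L.

Lemma mulQ (R : realFieldType) (Q : 'M[R]_3) (a b c d : R) : Q *m Q = Q ->
  (a *: 1%:M + b *: Q) *m (c *: 1%:M + d *: Q) = (a*c) *: 1%:M + (a*d + b*c + b*d) *: Q.
Proof.
move=> hQ.
rewrite mulmxDl !mulmxDr -!scalemxAl -!scalemxAr hQ !mul1mx mulmx1 !scalerA -scalemx1.
by rewrite !scalerDl -!addrA.
Qed.

Theorem mainTheorem9 (R : realFieldType) (v : 'cV[R]_3) (phi psi rho : R)
    (Pbb : 'M[R]_3)
    (hv : sqnorm v = 1) (hphi : 0 < phi) (hpsi : 0 < psi) (hrho : 0 < rho) :
  let P : 'M[R]_(3 + 3) :=
    block_mx (phi%:M) (- psi%:M) (trmx (- psi%:M)) Pbb in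
  let Rm : 'M[R]_3 := rho%:M in
  let H : 'M[R]_(3, 3 + 3) := row_mx (crossmx v) 0 in
  let S : 'M[R]_3 := H *m P *m trmx H + Rm in
  let K : 'M[R]_(3 + 3, 3) := P *m trmx H *m invmx S in
  let wa : R := 1 / (1 + rho / phi) in
  let wb : R := psi / phi in
  [/\ S \in unitmx,
      K = wa *: (col_mx (1%:M : 'M[R]_3) (- wb%:M) *m (trmx (crossmx v)))
    & forall xi : 'cV[R]_3,
        K *m (xi - v) = wa *: col_mx (crossv xi v) (- wb *: crossv xi v)].
Proof.
move=> P Rm H S K wa wb.
  have ms : forall (a : R) (A : 'M[R]_3), a%:M *m A = a *: A by move=> a A; exact: mul_scalar_mx.
set X := crossmx v. set Q := v *m v^T.
have hQ : Q *m Q = Q by apply: L3.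
have pr : phi + rho != 0 by rewrite gt_eqF // addr_gt0.
have r0 : rho != 0 by rewrite gt_eqF.
have p0 : phi != 0 by rewrite gt_eqF.
have SE : S = (phi + rho) *: 1%:M + (- phi) *: Q.
  rewrite /S /H /P /Rm tr_row_mx trmx0 mul_row_block !mul0mx !addr0 mul_row_col mulmx0 addr0.
  rewrite mul_mx_scalar -scalemxAl L1 // -/Q.
  rewrite scalerBr -(scalemx1 _ rho) scalerDl scaleNr; by rewrite addrAC.
set Si := (phi + rho)^-1 *: 1%:M + (rho^-1 - (phi + rho)^-1) *: Q.
have SSi : S *m Si = 1%:M.
  rewrite SE mulQ // mulfV // -[RHS]addr0; congr (_ + _); first by rewrite scale1r.
  have -> : (phi + rho) * (rho^-1 - (phi + rho)^-1) + - phi * (phi + rho)^-1 +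
      - phi * (rho^-1 - (phi + rho)^-1) = 0 by field; apply/andP.
  by rewrite scale0r.
have Su : S \in unitmx by case: (mulmx1_unit SSi).
have iS : invmx S = Si by rewrite -[invmx S]mulmx1 -SSi mulmxA mulVmx // mul1mx.
have XSi : X^T *m Si = (phi + rho)^-1 *: X^T.
  by rewrite mulmxDr -!scalemxAr L2 scaler0 addr0 mulmx1.
have KE : K = col_mx ((phi / (phi + rho)) *: X^T) ((- psi / (phi + rho)) *: X^T).
  rewrite /K iS /P /H tr_row_mx trmx0 mul_block_col !mulmx0 !addr0 mul_col_mx.
  have -> : (- psi%:M)^T = - psi%:M :> 'M[R]_3 by apply/matrixP => i j; rewrite !mxE eq_sym.
  rewrite mulNmx !ms -/X -!scalemxAl mulNmx -scalemxAl XSi !scalerA -scaleNr.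
  by rewrite mulNr.
have wae : wa = phi / (phi + rho).
  by rewrite /wa; field; rewrite pr p0.
split => //.
  rewrite KE mul_col_mx mul1mx mulNmx ms -scaleNr scale_col_mx !scalerA wae; congr col_mx; congr (_ *: _).
  rewrite /wb; field; by rewrite ?pr ?p0 ?r0.
move=> xi.
rewrite KE mul_col_mx -!scalemxAl L4 scale_col_mx !scalerA wae; congr col_mx; congr (_ *: _).
rewrite /wb; field; by rewrite ?pr ?p0 ?r0.
Qed.
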